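(* In the setting below, the intersection $\bigcap_{\nu\subseteq\{0,\dots,n\},|\nu|=n}\mathrm{Im}(P^\pi_\nu)$ is the space of all constant maps $\phi\equiv x_0$ on $X(n)$ where $x_0\in\mathbb{E}$ is a fixed point of $\pi(G)$ (i.e. $\pi(g)x_0=x_0$ for all $g\in G$).
   Context: Setting: $X$ is a pure $n$-dimensional partite simplicial complex (vertex set partitioned into $V_0,\dots,V_n$, each $n$-simplex having one vertex in each $V_i$; $\mathrm{type}(\tau)=\{i:\tau\cap V_i\neq\emptyset\}$), gallery connected (any two $n$-simplices are joined by a sequence of $n$-simplices with consecutive ones sharing an $(n-1)$-face), with all $1$-dimensional links (links of $(n-2)$-simplices) connected finite graphs. $G$ is a locally compact unimodular group with Haar measure $\mu$ acting cocompactly on $X$ by type-preserving simplicial automorphisms, with $G_\tau$ open compact for every $\tau\in X(n-2)\cup X(n-1)\cup X(n)$; $\pi$ is a strongly continuous representation of $G$ on a Banach space $\mathbb{E}$. $D(n)$ is a set of representatives of the $G$-orbits on $X(n)$. $C(X(n),\pi)$ is the space of maps $\phi:X(n)\to\mathbb{E}$ with $\phi(g.\sigma)=\pi(g)\phi(\sigma)$ for all $g,\sigma$, normed by $\|\phi\|^2=\sum_{\sigma\in D(n)}\frac{1}{\mu(G_\sigma)}|\phi(\sigma)|^2$. For $\nu\subseteq\{0,\dots,n\}$ with $|\nu|\in\{n-1,n\}$, write $\sigma\sim_\nu\sigma'$ if there is a simplex $\tau\subseteq\sigma\cap\sigma'$ with $\mathrm{type}(\tau)=\nu$, and define $P^\pi_\nu\phi(\sigma)=\frac{1}{|\{\sigma':\sigma'\sim_\nu\sigma\}|}\sum_{\sigma'\sim_\nu\sigma}\phi(\sigma')$,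 a projection on $C(X(n),\pi)$. *)

(* Defs.v *)
From HB Require Import structures.
From mathcomp Require Import all_boot all_order all_algebra.
From mathcomp Require Import finmap.
From mathcomp Require Import all_classical all_reals all_analysis.
From Stdlib Require Import Relation_Operators.
Set Implicit Arguments. Unset Strict Implicit. Unset Printing Implicit Defensive.
Import Order.TTheory GRing.Theory Num.Theory.
Import numFieldNormedType.Exports.

Local Open Scope classical_set_scope.
Local Open Scope fset_scope.
Local Open Scope ring_scope.

Definition simplicial_complex (V : choiceType) (X : {fset V} -> Prop) :=
  (forall s, X s -> s != fset0) /\
  (forall s t, X s -> t `<=` s -> t != fset0 -> X t).

Definition simplex_of_dim (V : choiceType) (X : {fset V} -> Prop) (k : nat)
  (s : {fset V}) := X s /\ #|` s| = k.+1.

Definition pure_dim (V : choiceType) (X : {fset V} -> Prop) (n : nat) :=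
  forall s, X s -> (#|` s| <= n.+1)%N /\
    exists2 s', s `<=` s' & simplex_of_dim X n s'.

Definition partite (V : choiceType) (X : {fset V} -> Prop) (n : nat)
  (t : V -> 'I_n.+1) :=
  forall s, simplex_of_dim X n s ->
    forall i : 'I_n.+1, exists! v, v \in s /\ t v = i.

Definition stype (V : choiceType) (n : nat) (t : V -> 'I_n.+1) (tau : {fset V})
  : {fset 'I_n.+1} := [fset t v | v in tau].

Definition gallery_adj (V : choiceType) (X : {fset V} -> Prop) (n : nat)
  (s s' : {fset V}) :=
  simplex_of_dim X n s /\ simplex_of_dim X n s' /\
  exists tau, [/\ X tau, #|` tau| = n, tau `<=` s & tau `<=` s'].

Definition gallery_connected (V : choiceType) (X : {fset V} -> Prop) (n : nat) :=
  forall s s', simplex_of_dim X n s -> simplex_of_dim X n s' ->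
    clos_refl_trans _ (gallery_adj X n) s s'.

Definition link_vertex (V : choiceType) (X : {fset V} -> Prop) (tau : {fset V})
  (v : V) := v \notin tau /\ X (v |` tau).
Definition link_edge (V : choiceType) (X : {fset V} -> Prop) (tau : {fset V})
  (u v : V) := [/\ u != v, u \notin tau, v \notin tau & X (u |` (v |` tau))].

Definition links_finite_connected (V : choiceType) (X : {fset V} -> Prop)
  (n : nat) :=
  forall tau, X tau -> (#|` tau|).+1 = n ->
    finite_set (link_vertex X tau) /\
    forall u v, link_vertex X tau u -> link_vertex X tau v ->
      clos_refl_trans _ (link_edge X tau) u v.

Definition group_laws (G : Type) (mul : G -> G -> G) (inv : G -> G) (e : G) :=
  [/\ forall x y z, mul x (mul y z) = mul (mul x y) z,
      forall x, mul e x = x & forall x, mul (inv x) x = e].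

Definition lc_topological_group (G : topologicalType) (mul : G -> G -> G)
  (inv : G -> G) (e : G) :=
  [/\ group_laws mul inv e,
      continuous (fun p : G * G => mul p.1 p.2),
      continuous inv,
      hausdorff_space G &
      forall x : G, exists2 U, nbhs x U & compact U].

Definition act_simplex (G V : choiceType) (act : G -> V -> V) (g : G)
  (s : {fset V}) : {fset V} := [fset act g v | v in s].

Definition type_preserving_action (G V : choiceType) (mul : G -> G -> G)
  (e : G) (X : {fset V} -> Prop) (n : nat) (t : V -> 'I_n.+1)
  (act : G -> V -> V) :=
  [/\ forall v, act e v = v,
      forall g h v, act (mul g h) v = act g (act h v),
      forall g s, X s <-> X (act_simplex act g s) &
      forall g v, t (act g v) = t v].

Definition cocompact (G V : choiceType) (X : {fset V} -> Prop) (n : nat)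
  (act : G -> V -> V) :=
  exists D : {fset {fset V}},
    (forall s, s \in D -> simplex_of_dim X n s) /\
    forall s, simplex_of_dim X n s ->
      exists g, exists2 s0, s0 \in D & s = act_simplex act g s0.

Definition stabilizer (G V : choiceType) (act : G -> V -> V) (tau : {fset V})
  : set G := [set g | act_simplex act g tau = tau].

Definition strongly_continuous_rep (R : realType) (G : topologicalType)
  (E : normedModType R) (mul : G -> G -> G) (e : G) (pi : G -> E -> E) :=
  [/\ forall g, linear (pi g),
      forall g, continuous (pi g),
      forall x, pi e x = x,
      forall g h x, pi (mul g h) x = pi g (pi h x) &
      forall x, continuous (fun g => pi g x)].

Definition equivariant (G V : choiceType) (R : realType) (E : normedModType R)
  (X : {fset V} -> Prop) (n : nat) (act : G -> V -> V) (pi : G -> E -> E)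
  (phi : {fset V} -> E) :=
  forall g s, simplex_of_dim X n s -> phi (act_simplex act g s) = pi g (phi s).

Definition sim_nu (V : choiceType) (X : {fset V} -> Prop) (n : nat)
  (t : V -> 'I_n.+1) (nu : {fset 'I_n.+1}) (s s' : {fset V}) :=
  simplex_of_dim X n s /\ simplex_of_dim X n s' /\
  exists tau, [/\ X tau, tau `<=` s, tau `<=` s' & stype t tau = nu].

Definition P_nu (V : choiceType) (R : realType) (E : normedModType R)
  (X : {fset V} -> Prop) (n : nat) (t : V -> 'I_n.+1) (nu : {fset 'I_n.+1})
  (phi : {fset V} -> E) (s : {fset V}) : E :=
  let N := [set s' | sim_nu X t nu s' s] in
  (#|` fset_set N|%:R)^-1 *: \sum_(s' \in N) phi s'.

Definition in_image_P_nu (G V : choiceType) (R : realType) (E : normedModType R)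
  (X : {fset V} -> Prop) (n : nat) (t : V -> 'I_n.+1) (act : G -> V -> V)
  (pi : G -> E -> E) (nu : {fset 'I_n.+1}) (phi : {fset V} -> E) :=
  exists2 psi, equivariant X n act pi psi &
    forall s, simplex_of_dim X n s -> phi s = P_nu X t nu psi s.

(* Main.v *)
Require Import Defs.
From HB Require Import structures.
From mathcomp Require Import all_boot all_order all_algebra.
From mathcomp Require Import finmap.
From mathcomp Require Import all_classical all_reals all_analysis.
From mathcomp Require Import zify.
From Stdlib Require Import Relation_Operators.
Import Order.TTheory GRing.Theory Num.Theory.
Import numFieldNormedType.Exports.
Local Open Scope classical_set_scope.
Local Open Scope fset_scope.
Local Open Scope ring_scope.
Set Implicit Arguments. Unset Strict Implicit.

Lemma lin_props (R : realType) (E : normedModType R) (f : E -> E) :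
  linear f ->
  [/\ f 0 = 0, forall u v, f (u + v) = f u + f v &
      forall (a : R) u, f (a *: u) = a *: f u].
Proof.
move=> H.
have H0 : f 0 = 0.
  have h := H 1 0 0; rewrite !scale1r addr0 in h.
  by apply: (@GRing.addrI _ (f 0)); rewrite addr0 -h.
split=> //.
  by move=> u v; have := H 1 u v; rewrite !scale1r.
by move=> a u; have := H a u 0; rewrite !addr0 H0 addr0.
Qed.

Lemma lin_sum (R : realType) (E : normedModType R) (f : E -> E) (T : Type)
  (r : seq T) (F : T -> E) : linear f ->
  f (\sum_(i <- r) F i) = \sum_(i <- r) f (F i).
Proof.
move=> /lin_props [H0 HD _]; elim: r => [|a r IH]; first by rewrite !big_nil.
by rewrite !big_cons HD IH.
Qed.

Lemma sum_const_seq (R : realType) (E : normedModType R) (T : Type)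
  (r : seq T) (x : E) : \sum_(i <- r) x = x *+ size r.
Proof.
elim: r => [|a r IH]; first by rewrite big_nil.
by rewrite big_cons IH /= GRing.mulrS.
Qed.

Lemma mulV_r (G : Type) (mul : G -> G -> G) (inv : G -> G) (e : G) :
  group_laws mul inv e -> forall x, mul x (inv x) = e.
Proof.
case=> A L I.
have key : forall h, mul h h = h -> h = e.
  by move=> h hh; rewrite -(L h) -(I h) -A hh.
move=> x; apply: key.
by rewrite -A (A (inv x) x (inv x)) I L.
Qed.

Lemma type_inj (V : choiceType) (X : {fset V} -> Prop) (n : nat)
  (t : V -> 'I_n.+1) (Hpart : partite X t) s :
  simplex_of_dim X n s -> {in s &, injective t}.
Proof.
move=> Ss u v us vs tuv.
have [x [_ uq]] := Hpart s Ss (t u).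
by rewrite -(uq u (conj us erefl)) (uq v (conj vs (esym tuv))).
Qed.

Lemma card_stype (V : choiceType) (X : {fset V} -> Prop) (n : nat)
  (t : V -> 'I_n.+1) (Hpart : partite X t) s tau :
  simplex_of_dim X n s -> tau `<=` s -> #|` stype t tau| = #|` tau|.
Proof.
move=> Ss sub; rewrite /stype card_in_imfset //.
move=> u v /(fsubsetP sub) us /(fsubsetP sub) vs. exact: (type_inj Hpart Ss).
Qed.

Lemma tau_eq (V : choiceType) (X : {fset V} -> Prop) (n : nat)
  (t : V -> 'I_n.+1) (Hpart : partite X t) s tau1 tau2 :
  simplex_of_dim X n s -> tau1 `<=` s -> tau2 `<=` s ->
  stype t tau1 = stype t tau2 -> tau1 = tau2.
Proof.
move=> Ss.
have step : forall a b, a `<=` s -> b `<=` s -> stype t a = stype t b ->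
    forall v, v \in a -> v \in b.
  move=> a b as_ bs eab v va.
  have : t v \in stype t b by rewrite -eab /stype in_imfset.
  case/imfsetP => w wb tvw.
  have -> : v = w.
    apply: (type_inj Hpart Ss) => //; [exact: (fsubsetP as_)|exact: (fsubsetP bs)].
  exact: wb.
move=> s1 s2 e12; apply/fsetP => v; apply/idP/idP; apply: step => //.
Qed.

Lemma sim_sym (V : choiceType) (X : {fset V} -> Prop) (n : nat)
  (t : V -> 'I_n.+1) nu s1 s2 : sim_nu X t nu s1 s2 -> sim_nu X t nu s2 s1.
Proof. by move=> [S1 [S2 [tau [Xt t1 t2 ty]]]]; split=> //; split=> //; exists tau. Qed.

Lemma sim_trans (V : choiceType) (X : {fset V} -> Prop) (n : nat)
  (t : V -> 'I_n.+1) (Hpart : partite X t) nu s1 s2 s' :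
  sim_nu X t nu s1 s2 -> sim_nu X t nu s' s1 -> sim_nu X t nu s' s2.
Proof.
move=> [S1 [S2 [tau [Xt t1 t2 ty]]]] [S' [_ [tau' [Xt' t's' t'1 ty']]]].
have e : tau' = tau by apply: (tau_eq Hpart S1) => //; rewrite ty ty'.
subst tau'.
by split=> //; split=> //; exists tau.
Qed.

Lemma N_eq (V : choiceType) (X : {fset V} -> Prop) (n : nat)
  (t : V -> 'I_n.+1) (Hpart : partite X t) nu s1 s2 :
  sim_nu X t nu s1 s2 ->
  [set s' | sim_nu X t nu s' s1] = [set s' | sim_nu X t nu s' s2].
Proof.
move=> h; apply/seteqP; split=> x /=.
  exact: (sim_trans Hpart h).
exact: (sim_trans Hpart (sim_sym h)).
Qed.

Lemma core_sim (V : choiceType) (X : {fset V} -> Prop) (n : nat)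
  (t : V -> 'I_n.+1) (Hpart : partite X t) (HX : simplicial_complex X) nu s :
  simplex_of_dim X n s -> nu != fset0 -> sim_nu X t nu s s.
Proof.
move=> Ss nu0.
pose tau := [fset v in s | t v \in nu].
have sub : tau `<=` s by apply/fsubsetP => v; rewrite !inE => /andP[].
have ty : stype t tau = nu.
  apply/fsetP => i; apply/imfsetP/idP.
    by move=> [v]; rewrite !inE => /andP[_ ?] ->.
  move=> inu; have [v [[vs tv] _]] := Hpart s Ss i.
  by exists v; rewrite ?inE ?vs ?tv ?inu.
have Xt : X tau.
  apply: HX.2 Ss.1 sub _.
  case/fset0Pn: nu0 => i inu.
  have [v [[vs tv] _]] := Hpart s Ss i.
  by apply/fset0Pn; exists v; rewrite !inE vs tv inu.
by split=> //; split=> //; exists tau.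
Qed.

Lemma N_fin (V : choiceType) (X : {fset V} -> Prop) (n : nat)
  (t : V -> 'I_n.+1) (Hpart : partite X t) (HX : simplicial_complex X)
  (Hlink : links_finite_connected X n) (Hn : (2 <= n)%N) nu s :
  simplex_of_dim X n s -> #|` nu| = n ->
  finite_set [set s' | sim_nu X t nu s' s].
Proof.
move=> Ss cnu.
case: (pselect (exists s0, sim_nu X t nu s0 s)) =>
   [[s0 [S0 [_ [tau [Xt t0 ts ty]]]]]|none]; last first.
  rewrite (_ : [set _ | _] = set0) //; apply/seteqP; split => x //= hx.
  by apply: none; exists x.
have ctau : #|` tau| = n by rewrite -(card_stype Hpart Ss ts) ty.
have : tau != fset0 by rewrite -cardfs_gt0 ctau; lia.
case/fset0Pn => u utau.
pose rho := tau `\ u.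
have crho : (#|` rho|).+1 = n.
  by have := cardfsD1 u tau; rewrite utau ctau => ->.
have rhosub : rho `<=` tau by apply: fsubD1set.
have Xrho : X rho.
  apply: HX.2 Xt rhosub _; rewrite -cardfs_gt0; lia.
have [Lfin _] := Hlink rho Xrho crho.
apply: (@sub_finite_set _ _
   [set` fpowerset (tau `|` fset_set (link_vertex X rho))]); last first.
  exact: finite_fset.
move=> s' [S' [_ [tau' [_ t's' t's ty']]]] /=.
have e : tau' = tau by apply: (tau_eq Hpart Ss) => //; rewrite ty ty'.
subst tau'.
rewrite fpowersetE; apply/fsubsetP => w ws'.
rewrite in_fsetU; case: (boolP (w \in tau)) => //= wtau.
rewrite in_fset_set //; apply/mem_set; split.
  by apply: contra wtau; move/(fsubsetP rhosub).
apply: HX.2 S'.1 _ _.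
  apply/fsubsetP => x; rewrite !inE => /orP[/eqP->//|].
  by move=> /andP[_ /(fsubsetP t's')].
by apply/fset0Pn; exists w; rewrite !inE eqxx.
Qed.

Lemma imfset_can (V : choiceType) (f h : V -> V) : cancel f h ->
  cancel (fun s : {fset V} => [fset f x | x in s])
         (fun s : {fset V} => [fset h x | x in s]).
Proof.
move=> fK s; apply/fsetP => v; apply/imfsetP/idP.
  by move=> [w /imfsetP [x xs ->] ->]; rewrite fK.
by move=> vs; exists (f v); [apply/imfsetP; exists v | rewrite fK].
Qed.

Lemma stype_act (V : choiceType) (n : nat) (t : V -> 'I_n.+1) (f : V -> V) :
  (forall v, t (f v) = t v) ->
  forall tau, stype t [fset f x | x in tau] = stype t tau.
Proof.
move=> Ht tau; apply/fsetP => i; apply/imfsetP/imfsetP.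
  by move=> [v /imfsetP[x xt ->] ->]; exists x => //; rewrite Ht.
by move=> [x xt ->]; exists (f x); [apply/imfsetP; exists x | rewrite Ht].
Qed.

Lemma imfset_sub (V : choiceType) (f : V -> V) (a b : {fset V}) :
  a `<=` b -> [fset f x | x in a] `<=` [fset f x | x in b].
Proof.
move=> ab; apply/fsubsetP => v /imfsetP [x xa ->]; apply/imfsetP; exists x => //.
exact: (fsubsetP ab).
Qed.

Lemma S_act (V : choiceType) (X : {fset V} -> Prop) (n : nat) (f : V -> V) :
  injective f -> (forall s, X s <-> X [fset f x | x in s]) ->
  forall s, simplex_of_dim X n s -> simplex_of_dim X n [fset f x | x in s].
Proof.
move=> finj HXf s [Xs cs]; split; first exact: (HXf s).1.
by rewrite card_imfset.
Qed.

Lemma sim_act (V : choiceType) (X : {fset V} -> Prop) (n : nat)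
  (t : V -> 'I_n.+1) (f : V -> V) :
  injective f -> (forall s, X s <-> X [fset f x | x in s]) ->
  (forall v, t (f v) = t v) ->
  forall nu s' s, sim_nu X t nu s' s ->
    sim_nu X t nu [fset f x | x in s'] [fset f x | x in s].
Proof.
move=> finj HXf Ht nu s' s [S' [Ss [tau [Xt t1 t2 ty]]]].
split; first exact: S_act.
split; first exact: S_act.
exists [fset f x | x in tau]; split.
- exact: (HXf tau).1.
- exact: imfset_sub.
- exact: imfset_sub.
- by rewrite stype_act.
Qed.

Lemma N_act (V : choiceType) (X : {fset V} -> Prop) (n : nat)
  (t : V -> 'I_n.+1) (f h : V -> V) (fK : cancel f h) (hK : cancel h f)
  (HXf : forall s, X s <-> X [fset f x | x in s])
  (HXh : forall s, X s <-> X [fset h x | x in s])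
  (Htf : forall v, t (f v) = t v) (Hth : forall v, t (h v) = t v) nu s :
  [set s' | sim_nu X t nu s' [fset f x | x in s]] =
  ((fun s0 : {fset V} => [fset f x | x in s0]) @` [set s' | sim_nu X t nu s' s])%classic.
Proof.
apply/seteqP; split.
  move=> s'' /= hs''; exists [fset h x | x in s''].
    have := sim_act (can_inj hK) HXh Hth hs''.
    by rewrite (imfset_can fK).
  by rewrite (imfset_can hK).
by move=> _ [x hx <-]; apply: sim_act => //; apply: can_inj fK.
Qed.

Lemma P_act (R : realType) (E : normedModType R)
  (V : choiceType) (X : {fset V} -> Prop) (n : nat)
  (t : V -> 'I_n.+1) (Hpart : partite X t) (HX : simplicial_complex X)
  (Hlink : links_finite_connected X n) (Hn : (2 <= n)%N)
  (f h : V -> V) (fK : cancel f h) (hK : cancel h f)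
  (HXf : forall s, X s <-> X [fset f x | x in s])
  (HXh : forall s, X s <-> X [fset h x | x in s])
  (Htf : forall v, t (f v) = t v) (Hth : forall v, t (h v) = t v)
  (A : E -> E) (linA : linear A) nu (cnu : #|` nu| = n) (psi : {fset V} -> E)
  (Hpsi : forall s, simplex_of_dim X n s -> psi [fset f x | x in s] = A (psi s))
  s (Ss : simplex_of_dim X n s) :
  P_nu X t nu psi [fset f x | x in s] = A (P_nu X t nu psi s).
Proof.
rewrite /P_nu /= (N_act fK hK HXf HXh Htf Hth).
set N := [set s' | _].
have Nf : finite_set N by apply: (N_fin Hpart HX Hlink Hn Ss cnu).
have Finj : injective (fun s0 : {fset V} => [fset f x | x in s0]).
  exact: can_inj (imfset_can fK).
rewrite fset_set_image // card_imfset // fsbig_image; last by move=> x y _ _ /Finj.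
have [_ _ AZ] := lin_props linA; rewrite AZ; congr (_ *: _).
rewrite (eq_fsbigr (fun s' => A (psi s'))); last first.
  by move=> x; rewrite inE => -[Sx _]; apply: Hpsi.
by rewrite !fsbig_finite // lin_sum.
Qed.

Lemma P_nu_eq (R : realType) (E : normedModType R)
  (V : choiceType) (X : {fset V} -> Prop) (n : nat)
  (t : V -> 'I_n.+1) (Hpart : partite X t) nu (psi : {fset V} -> E) s1 s2 :
  sim_nu X t nu s1 s2 -> P_nu X t nu psi s1 = P_nu X t nu psi s2.
Proof. by move=> h; rewrite /P_nu /= (N_eq Hpart h). Qed.

Unset Implicit Arguments.

Theorem lemma3p5
  (R : realType) (E : completeNormedModType R)
  (G : topologicalType) (mul : G -> G -> G) (inv : G -> G) (e : G)
  (HG : lc_topological_group mul inv e)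
  (V : choiceType) (X : {fset V} -> Prop) (n : nat) (t : V -> 'I_n.+1)
  (Hn : (2 <= n)%N)
  (HX : simplicial_complex X) (Hpure : pure_dim X n) (Hpart : partite X t)
  (Hgal : gallery_connected X n) (Hlink : links_finite_connected X n)
  (act : G -> V -> V) (Hact : type_preserving_action mul e X t act)
  (Hcoc : cocompact X n act)
  (Hstab : forall tau, X tau -> (n <= #|` tau|.+1)%N ->
             open (stabilizer act tau) /\ compact (stabilizer act tau))
  (pi : G -> E -> E) (Hpi : strongly_continuous_rep mul e pi) :
  forall phi : {fset V} -> E,
    (forall nu : {fset 'I_n.+1}, #|` nu| = n -> in_image_P_nu X t act pi nu phi)
    <->
    (exists x0 : E, (forall g, pi g x0 = x0) /\
       forall s, simplex_of_dim X n s -> phi s = x0).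
Proof.
have [grp _ _ _ _] := HG.
have [He Hm HXa Ht] := Hact.
have [Hlin _ _ _ _] := Hpi.
have can1 : forall g, cancel (act g) (act (inv g)).
  by move=> g v; rewrite -Hm; case: grp => _ _ ->; rewrite He.
have can2 : forall g, cancel (act (inv g)) (act g).
  by move=> g v; rewrite -Hm (mulV_r grp) He.
move=> phi; split.
- move=> Him.
  case: (pselect (exists s0, simplex_of_dim X n s0)) => [[s0 S0]|none]; last first.
    exists 0; split.
      by move=> g; have [] := lin_props (Hlin g).
    by move=> s Ss; exfalso; apply: none; exists s.
  have gal : forall a b, gallery_adj X n a b -> phi a = phi b.
    move=> a b [Sa [Sb [tau [Xt ct ta tb]]]].
    have cnu : #|` stype t tau| = n by rewrite (card_stype Hpart Sa ta).
    have [psi Hpsi Hphi] := Him _ cnu.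
    rewrite (Hphi a Sa) (Hphi b Sb); apply: (P_nu_eq Hpart).
    by split=> //; split=> //; exists tau.
  have const : forall s, simplex_of_dim X n s -> phi s = phi s0.
    move=> s Ss; elim: (Hgal _ _ Ss S0) => //.
    by move=> x y z _ -> _ ->.
  exists (phi s0); split => // g.
  have : s0 != fset0 by rewrite -cardfs_gt0 S0.2.
  case/fset0Pn => v vs0.
  have ctau : #|` s0 `\ v| = n.
    by have := cardfsD1 v s0; rewrite vs0 S0.2 add1n => -[].
  have cnu : #|` stype t (s0 `\ v)| = n.
    by rewrite (card_stype Hpart S0 (fsubD1set s0 v)).
  have [psi Hpsi Hphi] := Him _ cnu.
  have Sg : simplex_of_dim X n (act_simplex act g s0).
    exact: (S_act (can_inj (can1 g)) (HXa g)).
  transitivity (phi (act_simplex act g s0)); last exact: const _ Sg.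
  rewrite (Hphi _ Sg) (Hphi _ S0) /act_simplex.
  rewrite (P_act Hpart HX Hlink Hn (can1 g) (can2 g) (HXa g) (HXa (inv g))
    (Ht g) (Ht (inv g)) (Hlin g) cnu _ S0) //.
  by move=> s Ss; apply: Hpsi.
- case=> x0 [fix0 Hc] nu cnu.
  exists (fun _ => x0); first by move=> g s _; rewrite fix0.
  move=> s Ss; rewrite Hc // /P_nu /=.
  set N := [set s' | _].
  have Nf : finite_set N by apply: (N_fin Hpart HX Hlink Hn Ss cnu).
  have sN : N s.
    apply: (core_sim Hpart HX Ss); rewrite -cardfs_gt0 cnu; lia.
  rewrite fsbig_finite // sum_const_seq -[x0 *+ _](@scaler_nat R) scalerA mulVf ?scale1r //.
  rewrite pnatr_eq0 -lt0n.
  have : s \in fset_set N by rewrite in_fset_set // inE.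
  by case: (fset_set N) => [[|a l]].
Qed.
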